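(* Let $\mathcal{R}=(G_0,e\to R)$ be an expanding replacement system with full expansion sequence $\{G_n\}$, symbol space $\Omega$ and gluing relation $\sim$. Then: (1) each gluing vertex is represented by at least one point of $\Omega$; (2) each point of $\Omega$ represents at most one gluing vertex; (3) two distinct points of $\Omega$ are equivalent under $\sim$ if and only if they represent the same gluing vertex; (4) $\sim$ is an equivalence relation.
   Context: A graph means a finite directed multigraph (loops, multiple edges allowed). A replacement system $\mathcal{R}=(G_0,e\to R)$: $G_0$ a graph, $e$ a non-loop directed edge from $v$ to $w$, $R$ a graph containing $v,w$ (initial and terminal vertices of $R$; other vertices interior). Replacing an edge $\varepsilon$ of a graph means deleting it and gluing in a copy of $R$ with initial/terminal vertices identified with those of $\varepsilon$; new edges are $\varepsilon\zeta$ ($\zeta\in E(R)$) and new vertices $\varepsilon\nu$ ($\nu$ interior vertex of $R$). The full expansion sequence: $G_n$ is obtained from $G_{n-1}$ by replacing every edge, so $E(G_n)$ consists of words $\varepsilon_0\cdots\varepsilon_n$ ($\varepsilon_0\in E(G_0)$, $\varepsilon_i\in E(R)$) and $V(G_0)\subset V(G_1)\subset\cdots$. $\mathcal{R}$ is expanding if neither $G_0$ nor $R$ has isolated vertices, the initial and terminal vertices of $R$ are not joined by an edge, and $R$ has at least three vertices and two edges. The symbol space is $\Omega=E(G_0)\times E(R)^{\mathbb{N}}$. The gluing relation: $\varepsilon_0\varepsilon_1\cdots\sim\varepsilon_0'\varepsilon_1'\cdots$ iff for all $n$ the edges $\varepsilon_0\cdots\varepsilon_n$ and $\varepsilon_0'\cdots\varepsilon_n'$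 of $G_n$ share at least one vertex. Gluing vertices are the elements of $\bigcup_n V(G_n)$; a point $\varepsilon_0\varepsilon_1\cdots\in\Omega$ represents a gluing vertex $u$ if the edge $\varepsilon_0\cdots\varepsilon_n$ of $G_n$ is incident on $u$ for all sufficiently large $n$. *)

(* Defs.v *)
From mathcomp Require Import all_boot.
Set Implicit Arguments. Unset Strict Implicit. Unset Printing Implicit Defensive.

Record graph := Graph {
  gV : finType;
  gE : finType;
  gsrc : gE -> gV;
  gtgt : gE -> gV }.

(* A replacement system (G0, e -> R): the edge e goes from v to w (v <> w),
   and R is a graph containing the initial vertex v = rinit and terminal
   vertex w = rterm. *)
Record repl_system := ReplSystem {
  G0 : graph;
  RG : graph;
  rinit : gV RG;
  rterm : gV RG;
  rinit_neq_rterm : rinit != rterm }.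

Definition no_isolated (G : graph) : Prop :=
  forall v : gV G, exists x : gE G, gsrc x = v \/ gtgt x = v.

Definition expanding (S : repl_system) : Prop :=
  [/\ no_isolated (G0 S), no_isolated (RG S),
      (forall z : gE (RG S),
         ~ ((gsrc z = rinit S /\ gtgt z = rterm S) \/
            (gsrc z = rterm S /\ gtgt z = rinit S))),
      3 <= #|gV (RG S)| & 2 <= #|gE (RG S)| ]%N.

Section Expansion.
Variable S : repl_system.
Local Notation E0 := (gE (G0 S)).
Local Notation V0 := (gV (G0 S)).
Local Notation ER := (gE (RG S)).
Local Notation VR := (gV (RG S)).

(* Vertices of the expansion sequence: a vertex of G0, or a word
   eps0 eps1 ... epsk nu (with nu an interior vertex of R), the vertex
   created when replacing the edge eps0 ... epsk of G_k. *)
Inductive vtx :=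
  | Base of V0
  | New of E0 & seq ER & VR.

Definition interior (nu : VR) : bool := (nu != rinit S) && (nu != rterm S).

(* Gluing vertices: elements of the union of all V(G_n). *)
Definition gluing_vertex (u : vtx) : Prop :=
  match u with
  | Base _ => True
  | New _ _ nu => interior nu
  end.

(* Endpoints (source, target) of the edge eps0 (rev rl) of G_(size rl). *)
Fixpoint ends_rev (e0 : E0) (rl : seq ER) : vtx * vtx :=
  match rl with
  | [::] => (Base (gsrc e0), Base (gtgt e0))
  | z :: rl' =>
      let st := ends_rev e0 rl' in
      let conv nu :=
        if nu == rinit S then st.1
        else if nu == rterm S then st.2
        else New e0 (rev rl') nu in
      (conv (gsrc z), conv (gtgt z))
  end.

(* Source and target of the edge eps0 eps1 ... epsn of G_n, where l = [eps1;...;epsn]. *)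
Definition edge_src (e0 : E0) (l : seq ER) : vtx := (ends_rev e0 (rev l)).1.
Definition edge_tgt (e0 : E0) (l : seq ER) : vtx := (ends_rev e0 (rev l)).2.

Definition incident (e0 : E0) (l : seq ER) (u : vtx) : Prop :=
  edge_src e0 l = u \/ edge_tgt e0 l = u.

(* Symbol space Omega = E(G0) x E(R)^N; a point (e0, f) is
   eps0 eps1 eps2 ... with eps0 = e0 and eps_(i+1) = f i. *)
Definition Omega := (E0 * (nat -> ER))%type.

(* The edge eps0 ... epsn of G_n determined by a point. *)
Definition prefix (x : Omega) (n : nat) : seq ER := mkseq x.2 n.

Definition share_vertex (e0 : E0) (l : seq ER) (e0' : E0) (l' : seq ER) : Prop :=
  exists u : vtx, incident e0 l u /\ incident e0' l' u.

Definition gluing_rel (x y : Omega) : Prop :=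
  forall n : nat, share_vertex x.1 (prefix x n) y.1 (prefix y n).

Definition represents (x : Omega) (u : vtx) : Prop :=
  exists N : nat, forall n : nat, (N <= n)%N -> incident x.1 (prefix x n) u.

End Expansion.

(* Main.v *)
Require Import Defs.
From mathcomp Require Import all_boot.
From Stdlib Require Import Classical FunctionalExtensionality.
Set Implicit Arguments. Unset Strict Implicit. Unset Printing Implicit Defensive.

Definition cv (S : repl_system) (st : vtx S * vtx S) (e0 : gE (G0 S))
  (l : seq (gE (RG S))) (nu : gV (RG S)) : vtx S :=
  if nu == rinit S then st.1 else if nu == rterm S then st.2 else New e0 l nu.

Lemma ends_rcons (S : repl_system) e0 (l : seq (gE (RG S))) z :
  ends_rev e0 (rev (rcons l z)) =
  (cv (ends_rev e0 (rev l)) e0 l (gsrc z), cv (ends_rev e0 (rev l)) e0 l (gtgt z)).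
Proof. by rewrite rev_rcons /= revK. Qed.

Lemma cv_cases (S : repl_system) st e0 (l : seq (gE (RG S))) nu :
  cv st e0 l nu = st.1 \/ cv st e0 l nu = st.2 \/
  (cv st e0 l nu = New e0 l nu /\ interior nu).
Proof.
rewrite /cv /interior; case: eqP => [_|/eqP h1]; first by left.
case: eqP => [_|/eqP h2]; first by right; left.
by right; right; split=> //; apply/andP.
Qed.

Lemma cv_init (S : repl_system) st e0 (l : seq (gE (RG S))) :
  cv st e0 l (rinit S) = st.1.
Proof. by rewrite /cv eqxx. Qed.

Lemma cv_term (S : repl_system) st e0 (l : seq (gE (RG S))) :
  cv st e0 l (rterm S) = st.2.
Proof. by rewrite /cv eq_sym (negbTE (rinit_neq_rterm S)) eqxx. Qed.

Lemma inc_rcons (S : repl_system) e0 (l : seq (gE (RG S))) z u :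
  incident e0 (rcons l z) u ->
  exists nu, cv (ends_rev e0 (rev l)) e0 l nu = u.
Proof.
by rewrite /incident /edge_src /edge_tgt ends_rcons /= => -[<-|<-]; eexists.
Qed.

Lemma ends_shape (S : repl_system) e0 (l : seq (gE (RG S))) u :
  incident e0 l u ->
  match u with Base _ => True
  | New e0' w nu => [/\ e0' = e0, size w < size l, exists m, l = w ++ m & interior nu] end.
Proof.
elim/last_ind: l u => [|l z IH] u.
  by rewrite /incident /edge_src /edge_tgt /= => -[<-|<-].
move=> /inc_rcons [nu].
have IH' : forall u, u = (ends_rev e0 (rev l)).1 \/ u = (ends_rev e0 (rev l)).2 ->
  match u with Base _ => True
  | New e0' w nu => [/\ e0' = e0, size w < size l, exists m, l = w ++ m & interior nu] end.
  by move=> v [->|->]; apply: IH; [left|right].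
have [h|[h|[h hi]]] := cv_cases (ends_rev e0 (rev l)) e0 l nu; rewrite h => Hu; subst u.
- have := IH' _ (or_introl erefl); case: (ends_rev e0 (rev l)).1 => // a w b.
  case=> -> hs [m hm] hi; split=> //; first by rewrite size_rcons ltnS; apply: ltnW.
  by exists (rcons m z); rewrite hm rcons_cat.
- have := IH' _ (or_intror erefl); case: (ends_rev e0 (rev l)).2 => // a w b.
  case=> -> hs [m hm] hi; split=> //; first by rewrite size_rcons ltnS; apply: ltnW.
  by exists (rcons m z); rewrite hm rcons_cat.
- split=> //; first by rewrite size_rcons.
  by exists [:: z]; rewrite cats1.
Qed.

Lemma cv_int (S : repl_system) st e0 (l : seq (gE (RG S))) nu :
  interior nu -> cv st e0 l nu = New e0 l nu.
Proof. by rewrite /cv /interior => /andP[/negbTE -> /negbTE ->]. Qed.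

Lemma desc (S : repl_system) e0 (l m : seq (gE (RG S))) u :
  incident e0 (l ++ m) u ->
  incident e0 l u \/ exists w nu, u = New e0 w nu /\ exists m', w = l ++ m'.
Proof.
elim/last_ind: m u => [|m z IH] u; first by rewrite cats0; left.
rewrite -rcons_cat => /inc_rcons [nu].
have [h|[h|[h hi]]] := cv_cases (ends_rev e0 (rev (l ++ m))) e0 (l ++ m) nu;
  rewrite h => Hu.
- by apply: IH; left.
- by apply: IH; right.
- by right; exists (l ++ m), nu; split=> //; exists m.
Qed.

Lemma inc_down (S : repl_system) e0 (l : seq (gE (RG S))) z v :
  (forall e0' w nu, v = New e0' w nu -> size w < size l) ->
  incident e0 (rcons l z) v -> incident e0 l v.
Proof.
move=> hv /inc_rcons [nu].
have [h|[h|[h hi]]] := cv_cases (ends_rev e0 (rev l)) e0 l nu; rewrite h => Hu.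
- by left.
- by right.
- by move: (hv _ _ _ (esym Hu)); rewrite ltnn.
Qed.

Lemma prefix_size (S : repl_system) (x : Omega S) n : size (Defs.prefix x n) = n.
Proof. exact: size_mkseq. Qed.

Lemma prefixS (S : repl_system) (x : Omega S) n :
  Defs.prefix x n.+1 = rcons (Defs.prefix x n) (x.2 n).
Proof. exact: mkseqS. Qed.

Lemma prefix_take (S : repl_system) (x : Omega S) k n :
  k <= n -> take k (Defs.prefix x n) = Defs.prefix x k.
Proof. by move=> kn; rewrite /Defs.prefix /mkseq -map_take take_iota (minn_idPl kn). Qed.

Lemma prefix_cat (S : repl_system) (x : Omega S) k n :
  k <= n -> exists m, Defs.prefix x n = Defs.prefix x k ++ m.
Proof.
move=> kn; exists (drop k (Defs.prefix x n)).
by rewrite -{1}(cat_take_drop k (Defs.prefix x n)) prefix_take.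
Qed.

Lemma cat_eq_pref (T : Type) (l1 m1 l2 m2 : seq T) :
  l1 ++ m1 = l2 ++ m2 -> size l1 = size l2 -> l1 = l2.
Proof.
move=> e s; have := congr1 (take (size l1)) e.
by rewrite take_size_cat // s take_size_cat.
Qed.

Lemma shape_lt (S : repl_system) e0 (l : seq (gE (RG S))) u :
  incident e0 l u -> forall e0' w nu, u = New e0' w nu -> size w < size l.
Proof. by move=> /ends_shape h e0' w nu E; subst u; case: h. Qed.

Lemma shape_glue (S : repl_system) e0 (l : seq (gE (RG S))) u :
  incident e0 l u -> gluing_vertex u.
Proof. by move=> /ends_shape; case: u => //= a w b []. Qed.

Lemma rep_share (S : repl_system) (x y : Omega S) u :
  represents x u -> represents y u -> gluing_rel x y.
Proof.
move=> [N1 h1] [N2 h2] n.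
pose N := maxn (maxn N1 N2) n.
have nN : n <= N by rewrite leq_maxr.
have hx := h1 N (leq_trans (leq_maxl N1 N2) (leq_maxl _ _)).
have hy := h2 N (leq_trans (leq_maxr N1 N2) (leq_maxl _ _)).
have [mx hmx] := prefix_cat x nN; have [my hmy] := prefix_cat y nN.
rewrite hmx in hx; rewrite hmy in hy.
case: (desc hx) => [ix|[w [nu [Eu [m' Ew]]]]];
case: (desc hy) => [iy|[w' [nu' [Eu' [m'' Ew']]]]].
- by exists u.
- have := shape_lt ix Eu'; rewrite Ew' size_cat !prefix_size.
  by rewrite ltnNge leq_addr.
- have := shape_lt iy Eu; rewrite Ew size_cat !prefix_size.
  by rewrite ltnNge leq_addr.
- rewrite Eu in Eu'; case: Eu' => e1 e2 _; rewrite -e2 in Ew'.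
  have ep : Defs.prefix x n = Defs.prefix y n.
    apply: (cat_eq_pref (m1 := m') (m2 := m'')); first by rewrite -Ew -Ew'.
    by rewrite !prefix_size.
  exists (edge_src x.1 (Defs.prefix x n)); split; left => //.
  by rewrite e1 ep.
Qed.

Lemma rep_unique (S : repl_system)
  (H3 : forall z : gE (RG S),
         ~ ((gsrc z = rinit S /\ gtgt z = rterm S) \/
            (gsrc z = rterm S /\ gtgt z = rinit S)))
  (x : Omega S) u1 u2 : represents x u1 -> represents x u2 -> u1 = u2.
Proof.
move=> [N1 h1] [N2 h2]; pose N := maxn N1 N2.
have j1 := h1 N (leq_maxl _ _); have j2 := h2 N (leq_maxr _ _).
have i1 := h1 N.+1 (leq_trans (leq_maxl _ _) (leqnSn _)).
have i2 := h2 N.+1 (leq_trans (leq_maxr _ _) (leqnSn _)).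
apply: NNPP => hne.
rewrite prefixS in i1 i2.
set st := ends_rev x.1 (rev (Defs.prefix x N)) in i1 i2.
have key : forall u nu, incident x.1 (Defs.prefix x N) u ->
    cv st x.1 (Defs.prefix x N) nu = u -> nu = rinit S \/ nu = rterm S.
  move=> u nu iu; rewrite /cv; case: eqP => [->|_]; first by left.
  case: eqP => [->|_]; first by right.
  by move=> E; have := shape_lt iu (esym E); rewrite prefix_size ltnn.
set z := x.2 N in i1 i2.
have hz := H3 z.
move: i1 i2; rewrite /incident /edge_src /edge_tgt ends_rcons -/st /=.
case=> e1; case=> e2.
- by apply: hne; rewrite -e1 -e2.
- case: (key _ _ j1 e1) => ea; case: (key _ _ j2 e2) => eb.
  + by apply: hne; rewrite -e1 -e2 ea eb.
  + by apply: hz; left.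
  + by apply: hz; right.
  + by apply: hne; rewrite -e1 -e2 ea eb.
- case: (key _ _ j1 e1) => ea; case: (key _ _ j2 e2) => eb.
  + by apply: hne; rewrite -e1 -e2 ea eb.
  + by apply: hz; right.
  + by apply: hz; left.
  + by apply: hne; rewrite -e1 -e2 ea eb.
- by apply: hne; rewrite -e1 -e2.
Qed.

Lemma share_rep (S : repl_system) (x y : Omega S) :
  x <> y -> gluing_rel x y ->
  exists u, gluing_vertex u /\ represents x u /\ represents y u.
Proof.
move=> hxy Hg.
have [k hk] : exists k, (x.1, Defs.prefix x k) <> (y.1, Defs.prefix y k).
  apply: NNPP => hn; apply: hxy.
  have hall : forall k, (x.1, Defs.prefix x k) = (y.1, Defs.prefix y k).
    by move=> k; apply: NNPP => hk; apply: hn; exists k.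
  case: x y hall {hn Hg} => [e f] [e' g] hall.
  case: (hall 0) => /= ->; congr pair; apply: functional_extensionality => i.
  have E := congr1 snd (hall i.+1); have := congr1 (fun s => nth (f 0) s i) E.
  by rewrite /= !nth_mkseq.
pose a1 := edge_src x.1 (Defs.prefix x k); pose a2 := edge_tgt x.1 (Defs.prefix x k).
pose Pv v n := incident x.1 (Defs.prefix x n) v /\ incident y.1 (Defs.prefix y n) v.
have cover : forall n, k <= n -> Pv a1 n \/ Pv a2 n.
  move=> n kn; have [u [hux huy]] := Hg n.
  have [mx hmx] := prefix_cat x kn; have [my hmy] := prefix_cat y kn.
  have hx := hux; have hy := huy.
  rewrite hmx in hx; rewrite hmy in hy.
  case: (desc hx) => [[ix|ix]|[w [nu [Eu [m' Ew]]]]].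
  - by left; rewrite /a1 ix.
  - by right; rewrite /a2 ix.
  case: (desc hy) => [iy|[w' [nu' [Eu' [m'' Ew']]]]].
  - have := shape_lt iy Eu; rewrite Ew size_cat !prefix_size.
    by rewrite ltnNge leq_addr.
  - rewrite Eu in Eu'; case: Eu' => e1 e2 _; rewrite -e2 in Ew'.
    exfalso; apply: hk; rewrite e1; congr pair.
    apply: (cat_eq_pref (m1 := m') (m2 := m'')); first by rewrite -Ew -Ew'.
    by rewrite !prefix_size.
have endA : forall v, (v = a1 \/ v = a2) -> incident x.1 (Defs.prefix x k) v.
  by move=> v [->|->]; [left|right].
have down : forall v n, (v = a1 \/ v = a2) -> k <= n -> Pv v n.+1 -> Pv v n.
  move=> v n hv kn [p1 p2].
  have hs := shape_lt (endA v hv); rewrite prefix_size in hs.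
  have hs' : forall e0' w nu, v = New e0' w nu -> size w < n.
    by move=> ? ? ? E; apply: leq_trans (hs _ _ _ E) kn.
  rewrite prefixS in p1; rewrite prefixS in p2; split.
  - by apply: inc_down p1 => ? ? ? E; rewrite prefix_size; apply: hs' E.
  - by apply: inc_down p2 => ? ? ? E; rewrite prefix_size; apply: hs' E.
have downd : forall v d n, (v = a1 \/ v = a2) -> k <= n -> Pv v (n + d) -> Pv v n.
  move=> v; elim=> [|d IH] n hv kn; first by rewrite addn0.
  rewrite addnS => h; apply: IH => //; apply: down => //.
  by apply: leq_trans (leq_addr _ _).
have glue : forall v, (v = a1 \/ v = a2) -> gluing_vertex v.
  by move=> v hv; apply: shape_glue (endA v hv).
case: (classic (forall n, k <= n -> Pv a1 n)) => [hall|hn].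
  exists a1; split; first by apply: glue; left.
  by split; exists k => n kn; case: (hall n kn).
have [n1 hn1] : exists n1, ~ (k <= n1 -> Pv a1 n1).
  by apply: NNPP => h; apply: hn => n; apply: NNPP => h'; apply: h; exists n;
     apply: h'.
have kn1 : k <= n1 by apply: NNPP => h; apply: hn1 => /h.
have nP1 : ~ Pv a1 n1 by move=> h; apply: hn1.
have P2 : forall n, n1 <= n -> Pv a2 n.
  move=> n hn1n; case: (cover n (leq_trans kn1 hn1n)) => // h; exfalso; apply: nP1.
  apply: (downd a1 (n - n1)); [by left|by []|by rewrite subnKC].
exists a2; split; first by apply: glue; right.
by split; exists n1 => n kn; case: (P2 n kn).
Qed.

Lemma extend (S : repl_system) (HR : no_isolated (RG S)) e0
  (l : seq (gE (RG S))) u : incident e0 l u -> exists x : Omega S, represents x u.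
Proof.
have [za hza] := HR (rinit S); have [zb hzb] := HR (rterm S).
pose nx (b : bool) := if b then (za, gsrc za == rinit S) else (zb, gsrc zb == rterm S).
have gen : forall b0 : bool,
    (if b0 then edge_src e0 l else edge_tgt e0 l) = u -> exists x : Omega S, represents x u.
  move=> b0 hb0.
  pose fix sd n := if n is n'.+1 then (nx (sd n')).2 else b0.
  pose g n := (nx (sd n)).1.
  have inv : forall n, (if sd n then edge_src e0 (l ++ mkseq g n)
                        else edge_tgt e0 (l ++ mkseq g n)) = u.
    elim=> [|n IH]; first by rewrite cats0.
    rewrite mkseqS -rcons_cat /edge_src /edge_tgt ends_rcons.
    move: IH; rewrite /edge_src /edge_tgt /g.
    set st := ends_rev e0 (rev (l ++ mkseq _ n)).
    rewrite [sd n.+1]/=.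
    case: (sd n) => IH /=.
    + case: eqP => [h|h]; first by rewrite /= h cv_init.
      have -> : gtgt za = rinit S by case: hza => // /h.
      by rewrite /= cv_init.
    + case: eqP => [h|h]; first by rewrite /= h cv_term.
      have -> : gtgt zb = rterm S by case: hzb => // /h.
      by rewrite /= cv_term.
  pose x : Omega S := (e0, fun i => nth (g (i - size l)) l i).
  exists x, (size l) => n hn.
  have -> : Defs.prefix x n = l ++ mkseq g (n - size l).
    apply: (@eq_from_nth _ za).
      by rewrite size_cat !size_mkseq subnKC.
    move=> i; rewrite size_mkseq => hi; rewrite nth_mkseq // nth_cat /=.
    case: ltnP => hil; first by apply: set_nth_default.
    rewrite nth_default // nth_mkseq //.
    by rewrite ltn_sub2r // (leq_ltn_trans hil hi).
  by have := inv (n - size l); case: (sd _) => h; [left|right].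
by case=> h; [apply: (gen true) | apply: (gen false)].
Qed.

Theorem proposition1p21 (S : repl_system) (Hexp : expanding S) :
  (* (1) *)
  (forall u : vtx S, gluing_vertex u -> exists x : Omega S, represents x u) /\
  (* (2) *)
  (forall (x : Omega S) (u1 u2 : vtx S),
     gluing_vertex u1 -> gluing_vertex u2 ->
     represents x u1 -> represents x u2 -> u1 = u2) /\
  (* (3) *)
  (forall x y : Omega S, x <> y ->
     (gluing_rel x y <->
      exists u : vtx S, gluing_vertex u /\ represents x u /\ represents y u)) /\
  (* (4) *)
  (forall x : Omega S, gluing_rel x x) /\
  (forall x y : Omega S, gluing_rel x y -> gluing_rel y x) /\
  (forall x y z : Omega S, gluing_rel x y -> gluing_rel y z -> gluing_rel x z).
Proof.
case: Hexp => HG0 HR H3 _ _.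
split.
  case=> [v|e0 w nu] /= hg.
    have [e he] := HG0 v.
    apply: (@extend S HR e [::]).
    by case: he => h; [left|right]; rewrite /edge_src /edge_tgt /= h.
  have [z hz] := HR nu.
  apply: (@extend S HR e0 (rcons w z)).
  rewrite /incident /edge_src /edge_tgt ends_rcons /=.
  by case: hz => ->; [left|right]; rewrite cv_int.
split.
  by move=> x u1 u2 _ _; apply: rep_unique.
split.
  move=> x y hxy; split; first exact: share_rep.
  by case=> u [_ [hx hy]]; apply: rep_share hx hy.
split.
  by move=> x n; exists (edge_src x.1 (Defs.prefix x n)); split; left.
split.
  by move=> x y h n; have [u [h1 h2]] := h n; exists u.
move=> x y z hxy hyz.
case: (classic (x = y)) => [->//|nxy].
case: (classic (y = z)) => [<-//|nyz].
have [u [_ [hx hy]]] := share_rep nxy hxy.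
have [v [_ [hy' hz]]] := share_rep nyz hyz.
have E := rep_unique H3 hy hy'; subst v.
exact: rep_share hx hz.
Qed.
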